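(* Let $\mathcal{A}\in\mathcal{T}'_5$ with $c_{13}^4=c_{14}^5=c_{24}^5=0$. Then the automorphisms of $\mathcal{A}$ are exactly the linear maps $\varphi$ given by $\varphi(e_1)=xe_1+a_{41}e_4+a_{51}e_5$, $\varphi(e_2)=a_{12}e_1+ye_2+a_{42}e_4+a_{52}e_5$, $\varphi(e_3)=xye_3$, $\varphi(e_4)=xy^2e_4+a_{54}e_5$, $\varphi(e_5)=x^2y^3e_5$, where $x,y\in\mathbb{C}^*$, $a_{12},a_{42},a_{51},a_{52}\in\mathbb{C}$ are arbitrary, $a_{41}=c_{13}^5x(1-y^2)$ and $a_{54}=xy(a_{12}c_{13}^5-a_{42})$.
   Context: Over $\mathbb{C}$, basis $e_1,\dots,e_n$, $e_ie_j=\sum_kc_{ij}^ke_k$. For $n\ge3$, $\mathcal{T}'_n$ is the family of anticommutative algebra structures with $c_{ij}^k=0$ whenever $k\le\max\{i,j\}$ and $e_ie_{i+1}=e_{i+2}$ for $1\le i\le n-2$, other structure constants arbitrary subject to these and anticommutativity. *)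

(* Defs.v *)
(* The ground field C = ℂ is modelled as R[i] = complex R
   for an arbitrary R : realType (the real numbers). *)
From HB Require Import structures.
From mathcomp Require Import all_boot all_order all_algebra.

Set Implicit Arguments. Unset Strict Implicit. Unset Printing Implicit Defensive.
Import Order.TTheory GRing.Theory Num.Theory.
Local Open Scope ring_scope.

Section Defs.
Variable C : fieldType.

(* structure constants c i j k = c_{ij}^k, indices 0-based: c_{ij}^k is
   c (i-1) (j-1) (k-1) *)
Definition sconst (n : nat) := 'I_n -> 'I_n -> 'I_n -> C.

Definition cst (c : sconst 5) (i j k : nat) : C :=
  c (inord i.-1) (inord j.-1) (inord k.-1).

Definition bvec (k : nat) : 'rV[C]_5 := delta_mx 0 (inord k.-1).

Definition amul n (c : sconst n) (u v : 'rV[C]_n) : 'rV[C]_n :=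
  \row_k \sum_(i < n) \sum_(j < n) u 0 i * v 0 j * c i j k.

Definition in_Tprime n (c : sconst n) : Prop :=
  [/\ (3 <= n)%N,
      (forall i j k, c i j k = - c j i k),
      (forall i k, c i i k = 0),
      (forall i j k : 'I_n, (k <= maxn i j)%N -> c i j k = 0) &
      (forall (i j k : 'I_n), j = i.+1 :> nat -> (i.+2 < n)%N ->
         c i j k = (k == i.+2 :> nat)%:R)].

(* an automorphism: a bijective linear map phi (v |-> v *m A, so that row i
   of A is phi(e_{i+1})) with phi(uv) = phi(u) phi(v) *)
Definition is_automorphism n (c : sconst n) (A : 'M[C]_n) : Prop :=
  A \in unitmx /\
  forall u v : 'rV[C]_n, amul c (u *m A) (v *m A) = amul c u v *m A.

End Defs.

(* Main.v *)
Require Import Defs.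
From HB Require Import structures.
From mathcomp Require Import all_boot all_order all_algebra.
From mathcomp Require Import reals complex.
From mathcomp Require Import ring.
Import Order.TTheory GRing.Theory Num.Theory.
Local Open Scope ring_scope.

Set Implicit Arguments. Unset Strict Implicit.
Section Aux.
Variable F : fieldType.

Lemma sum5 (G : 'I_5 -> F) : \sum_(i<5) G i =
  G (inord 0) + G (inord 1) + G (inord 2) + G (inord 3) + G (inord 4).
Proof.
rewrite !big_ord_recr big_ord0 /= add0r.
by congr (_+_+_+_+_); congr G; apply: val_inj; rewrite /= inordK.
Qed.

Lemma bvecE k j : (k < 5)%N -> (j < 5)%N -> bvec F k.+1 0 (inord j) = (k == j)%:R.
Proof.
move=> hk hj; rewrite /bvec mxE eqxx /=.
by rewrite -val_eqE /= !inordK // eq_sym.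
Qed.

Lemma mulE (u : 'rV[F]_5) (A : 'M[F]_5) k : (u *m A) 0 k =
  u 0 (inord 0) * A (inord 0) k + u 0 (inord 1) * A (inord 1) k +
  u 0 (inord 2) * A (inord 2) k + u 0 (inord 3) * A (inord 3) k +
  u 0 (inord 4) * A (inord 4) k.
Proof. by rewrite mxE sum5. Qed.

Definition cf (a : F) (i j k : nat) : F := match i, j, k with
 | 0,1,2 => 1 | 1,0,2 => -1 | 1,2,3 => 1 | 2,1,3 => -1 | 2,3,4 => 1
 | 3,2,4 => -1 | 0,2,4 => a | 2,0,4 => -a | _,_,_ => 0 end.

Variable c : sconst F 5.
Hypothesis Hc : in_Tprime c.
Hypothesis h134 : c (inord 0) (inord 2) (inord 3) = 0.
Hypothesis h145 : c (inord 0) (inord 3) (inord 4) = 0.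
Hypothesis h245 : c (inord 1) (inord 3) (inord 4) = 0.
Let al := c (inord 0) (inord 2) (inord 4).

Lemma cv i j k : (i < 5)%N -> (j < 5)%N -> (k < 5)%N ->
  c (inord i) (inord j) (inord k) = cf al i j k.
Proof.
case: Hc => _ Hanti Hdiag Hmax Hcons.
have base : forall i j k, (i < 5)%N -> (j < 5)%N -> (k < 5)%N ->
   (k <= maxn i j)%N -> c (inord i) (inord j) (inord k) = 0.
  by move=> a b d ha hb hd hm; apply: Hmax; rewrite !inordK.
have cons : forall i k, (i.+2 < 5)%N -> (k < 5)%N ->
   c (inord i) (inord i.+1) (inord k) = (k == i.+2)%:R.
  move=> a d ha hd; have ha1 : (a.+1 < 5)%N by apply: ltnW.
  have ha0 : (a < 5)%N by apply: ltnW.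
  by rewrite Hcons; rewrite ?inordK.
do 5?[case: i => [|i]]; do 5?[case: j => [|j]]; do 5?[case: k => [|k]];
 rewrite //= => _ _ _;
 first [ by rewrite base
       | by rewrite cons
       | by rewrite Hanti cons ?oppr0
       | by rewrite Hdiag
       | by rewrite Hanti base ?oppr0
       | by rewrite ?h134 ?h145 ?h245
       | by rewrite Hanti ?h134 ?h145 ?h245 ?oppr0
       | idtac ].
Qed.

Definition amulF (u v : 'rV[F]_5) (k : nat) : F :=
  let u_ i := u 0 (inord i) in let v_ i := v 0 (inord i) in
  match k with
  | 2 => u_ 0%N * v_ 1%N - u_ 1%N * v_ 0%N
  | 3 => u_ 1%N * v_ 2%N - u_ 2%N * v_ 1%N
  | 4 => al * (u_ 0%N * v_ 2%N - u_ 2%N * v_ 0%N) + (u_ 2%N * v_ 3%N - u_ 3%N * v_ 2%N)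
  | _ => 0 end.

Lemma amulE u v k : (k < 5)%N -> amul c u v 0 (inord k) = amulF u v k.
Proof.
by do 5?[case: k => [|k]] => // _; rewrite /amulF mxE !sum5 !cv //=; ring.
Qed.
End Aux.

Lemma rowP5 (F : fieldType) (u v : 'rV[F]_5) :
  (forall k, (k < 5)%N -> u 0 (inord k) = v 0 (inord k)) -> u = v.
Proof. by move=> H; apply/rowP => q; have := H q (ltn_ord q); rewrite inord_val. Qed.

Lemma rowA (F : fieldType) (A : 'M[F]_5) i p : (bvec F i.+1 *m A) 0 p = A (inord i) p.
Proof. by rewrite /bvec -rowE mxE. Qed.

Unset Implicit Arguments.
Local Open Scope complex_scope.

Lemma use_eq (F : fieldType) (k P Q L R : F) : L = R -> P - Q = k * (L - R) -> P = Q.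
Proof. by move=> -> ; rewrite subrr mulr0 => /eqP; rewrite subr_eq0 => /eqP. Qed.
Arguments use_eq {F} k {P Q L R}.

Lemma addE (F : fieldType) (u v : 'rV[F]_5) k : (u + v) 0 k = u 0 k + v 0 k.
Proof. by rewrite mxE. Qed.
Lemma sclE (F : fieldType) a (u : 'rV[F]_5) k : (a *: u) 0 k = a * u 0 k.
Proof. by rewrite mxE. Qed.

Ltac get G al i j k := move: (G i j k isT isT isT);
    rewrite /amulF ?rowA ?bvecE //= -/al
      ?(mul0r,mulr0,mul1r,mulr1,subr0,sub0r,add0r,addr0,oppr0).
Ltac fin := let e := fresh "e" in move=> e;
    first [ apply: (use_eq 1 e); ring | apply: (use_eq (-1) e); ring ].

Theorem mainTheorem15 (R : realType) (c : sconst R[i] 5) :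
  in_Tprime c ->
  cst c 1 3 4 = 0 -> cst c 1 4 5 = 0 -> cst c 2 4 5 = 0 ->
  forall A : 'M[R[i]]_5,
    is_automorphism c A <->
    exists (x y a12 a42 a51 a52 : R[i]),
      [/\ x != 0, y != 0 &
      [/\ bvec R[i] 1 *m A = x *: bvec R[i] 1
                          + (cst c 1 3 5 * x * (1 - y ^+ 2)) *: bvec R[i] 4
                          + a51 *: bvec R[i] 5,
          bvec R[i] 2 *m A = a12 *: bvec R[i] 1 + y *: bvec R[i] 2
                          + a42 *: bvec R[i] 4 + a52 *: bvec R[i] 5,
          bvec R[i] 3 *m A = (x * y) *: bvec R[i] 3,
          bvec R[i] 4 *m A = (x * y ^+ 2) *: bvec R[i] 4
                          + (x * y * (a12 * cst c 1 3 5 - a42)) *: bvec R[i] 5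
        & bvec R[i] 5 *m A = (x ^+ 2 * y ^+ 3) *: bvec R[i] 5]].
Proof.
move=> Hc h1 h2 h3 A.
rewrite /cst /= in h1 h2 h3.
have -> : cst c 1 3 5 = c (inord 0) (inord 2) (inord 4) by [].
set al := c (inord 0) (inord 2) (inord 4).
have AE := amulE Hc h1 h2 h3.
split.
- case=> Au Hm.
  have EQ : forall i j k, (i < 5)%N -> (j < 5)%N -> (k < 5)%N ->
    amulF c (bvec _ i.+1 *m A) (bvec _ j.+1 *m A) k =
    amulF c (bvec _ i.+1) (bvec _ j.+1) 0 * A (inord 0) (inord k) +
    amulF c (bvec _ i.+1) (bvec _ j.+1) 1 * A (inord 1) (inord k) +
    amulF c (bvec _ i.+1) (bvec _ j.+1) 2 * A (inord 2) (inord k) +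
    amulF c (bvec _ i.+1) (bvec _ j.+1) 3 * A (inord 3) (inord k) +
    amulF c (bvec _ i.+1) (bvec _ j.+1) 4 * A (inord 4) (inord k).
    move=> i j k hi hj hk; rewrite -!AE //.
    move/rowP: (Hm (bvec _ i.+1) (bvec _ j.+1)) => /(_ (inord k)) ->.
    by rewrite mulE.

  have f20 : A (inord 2) (inord 0) = 0 by get EQ al 0%N 1%N 0%N; fin.
  have f21 : A (inord 2) (inord 1) = 0 by get EQ al 0%N 1%N 1%N; fin.
  have f30 : A (inord 3) (inord 0) = 0 by get EQ al 1%N 2%N 0%N; fin.
  have f31 : A (inord 3) (inord 1) = 0 by get EQ al 1%N 2%N 1%N; fin.
  have f32 : A (inord 3) (inord 2) = 0 by get EQ al 1%N 2%N 2%N; rewrite f20 f21; fin.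
  have f40 : A (inord 4) (inord 0) = 0 by get EQ al 2%N 3%N 0%N; fin.
  have f41 : A (inord 4) (inord 1) = 0 by get EQ al 2%N 3%N 1%N; fin.
  have f42 : A (inord 4) (inord 2) = 0 by get EQ al 2%N 3%N 2%N; rewrite f20 f21; fin.
  have f43 : A (inord 4) (inord 3) = 0 by get EQ al 2%N 3%N 3%N; rewrite f21 f31; fin.
  have f44 : A (inord 4) (inord 4) = A (inord 2) (inord 2) * A (inord 3) (inord 3).
    by get EQ al 2%N 3%N 4%N; rewrite f20 f30 f32; fin.
  have f33 : A (inord 3) (inord 3) = A (inord 1) (inord 1) * A (inord 2) (inord 2).
    by get EQ al 1%N 2%N 3%N; rewrite f21; fin.
  have r4 : bvec _ 5 *m A = A (inord 4) (inord 4) *: bvec _ 5.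
    apply: rowP5 => k; do 5?[case: k => [|k]] => // _;
    by rewrite rowA ?addE ?sclE bvecE //= ?f40 ?f41 ?f42 ?f43; ring.
  have nz44 : A (inord 4) (inord 4) != 0.
    apply/eqP => h0; move: r4; rewrite h0 scale0r => /eqP.
    rewrite mulmx_free_eq0 ?row_free_unit // => /eqP/rowP/(_ (inord 4)).
    by rewrite bvecE // mxE /= => /eqP; rewrite oner_eq0.
  have nz22 : A (inord 2) (inord 2) != 0.
    by apply: contraNneq nz44; rewrite f44 => ->; rewrite mul0r.
  have nz33 : A (inord 3) (inord 3) != 0.
    by apply: contraNneq nz44; rewrite f44 => ->; rewrite mulr0.
  have nz11 : A (inord 1) (inord 1) != 0.
    by apply: contraNneq nz33; rewrite f33 => ->; rewrite mul0r.
  have f02 : A (inord 0) (inord 2) = 0.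
    apply/eqP; rewrite -(mulIr_eq0 _ (mulIf nz33)); apply/eqP.
    by get EQ al 0%N 3%N 4%N; rewrite f32 f30; fin.
  have f12 : A (inord 1) (inord 2) = 0.
    apply/eqP; rewrite -(mulIr_eq0 _ (mulIf nz33)); apply/eqP.
    by get EQ al 1%N 3%N 4%N; rewrite f32 f30; fin.
  have f01 : A (inord 0) (inord 1) = 0.
    apply/eqP; rewrite -(mulIr_eq0 _ (mulIf nz22)); apply/eqP.
    by get EQ al 0%N 2%N 3%N; rewrite f43 f21; fin.
  have f22 : A (inord 2) (inord 2) = A (inord 0) (inord 0) * A (inord 1) (inord 1).
    by get EQ al 0%N 1%N 2%N; rewrite f01; fin.
  have f23 : A (inord 2) (inord 3) = 0.
    by get EQ al 0%N 1%N 3%N; rewrite f12 f02; fin.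
  have f24 : A (inord 2) (inord 4) = 0.
    by get EQ al 0%N 1%N 4%N; rewrite f12 f02; fin.
  have f34 : A (inord 3) (inord 4) =
      A (inord 2) (inord 2) * (al * A (inord 1) (inord 0) - A (inord 1) (inord 3)).
    by get EQ al 1%N 2%N 4%N; rewrite f12 f20 f23; fin.
  have f03 : A (inord 0) (inord 3) =
      al * A (inord 0) (inord 0) * (1 - A (inord 1) (inord 1) ^+ 2).
    apply: (mulIf nz22).
    get EQ al 0%N 2%N 4%N; rewrite f02 f20 f44 f33; move=> e.
    apply: (use_eq (-1) e); rewrite f22; ring.
  have nz0 : A (inord 0) (inord 0) != 0.
    by apply: contraNneq nz22; rewrite f22 => ->; rewrite mul0r.
  exists (A (inord 0) (inord 0)), (A (inord 1) (inord 1)),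
    (A (inord 1) (inord 0)), (A (inord 1) (inord 3)),
    (A (inord 0) (inord 4)), (A (inord 1) (inord 4)).
  split=> //; split; apply: rowP5 => k; do 5?[case: k => [|k]] => // _;
    rewrite rowA ?addE ?sclE ?bvecE //= ?f01 ?f02 ?f03 ?f12 ?f20 ?f21 ?f23 ?f24
      ?f30 ?f31 ?f32 ?f34 ?f40 ?f41 ?f42 ?f43 ?f44 ?f33 ?f22; ring.
- case=> [x [y [a12 [a42 [a51 [a52 [nx ny [H1 H2 H3 H4 H5]]]]]]]].
  have A0 k : (k < 5)%N -> A (inord 0) (inord k) =
      [:: x; 0; 0; al * x * (1 - y ^+ 2); a51]`_k.
    move=> hk; rewrite -rowA H1 !addE !sclE !bvecE //.
    by move: hk; do 5?[case: k => [|k]] => //= _; ring.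
  have A1 k : (k < 5)%N -> A (inord 1) (inord k) = [:: a12; y; 0; a42; a52]`_k.
    move=> hk; rewrite -rowA H2 !addE !sclE !bvecE //.
    by move: hk; do 5?[case: k => [|k]] => //= _; ring.
  have A2 k : (k < 5)%N -> A (inord 2) (inord k) = [:: 0; 0; x * y; 0; 0]`_k.
    move=> hk; rewrite -rowA H3 !sclE !bvecE //.
    by move: hk; do 5?[case: k => [|k]] => //= _; ring.
  have A3 k : (k < 5)%N -> A (inord 3) (inord k) =
      [:: 0; 0; 0; x * y ^+ 2; x * y * (a12 * al - a42)]`_k.
    move=> hk; rewrite -rowA H4 !addE !sclE !bvecE //.
    by move: hk; do 5?[case: k => [|k]] => //= _; ring.
  have A4 k : (k < 5)%N -> A (inord 4) (inord k) = [:: 0; 0; 0; 0; x ^+ 2 * y ^+ 3]`_k.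
    move=> hk; rewrite -rowA H5 !sclE !bvecE //.
    by move: hk; do 5?[case: k => [|k]] => //= _; ring.
  split.
    rewrite -row_free_unit; apply: inj_row_free => v hv.
    have e k : (k < 5)%N -> (v *m A) 0 (inord k) = 0 by move=> _; rewrite hv mxE.
    have e1 : v 0 (inord 1) * y = 0.
      by move: (e 1%N isT); rewrite mulE !A0 // !A1 // !A2 // !A3 // !A4 //=; fin.
    have v1 : v 0 (inord 1) = 0.
      by move/eqP: e1; rewrite mulf_eq0 (negbTE ny) orbF => /eqP.
    have e0 : v 0 (inord 0) * x = 0.
      by move: (e 0%N isT); rewrite mulE !A0 // !A1 // !A2 // !A3 // !A4 //= v1; fin.
    have v0 : v 0 (inord 0) = 0.
      by move/eqP: e0; rewrite mulf_eq0 (negbTE nx) orbF => /eqP.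
    have e2 : v 0 (inord 2) * (x * y) = 0.
      by move: (e 2%N isT); rewrite mulE !A0 // !A1 // !A2 // !A3 // !A4 //= v1 v0; fin.
    have v2 : v 0 (inord 2) = 0.
      have nz : x * y != 0 by rewrite mulf_neq0.
      by move/eqP: e2; rewrite mulf_eq0 (negbTE nz) orbF => /eqP.
    have e3 : v 0 (inord 3) * (x * y ^+ 2) = 0.
      by move: (e 3%N isT); rewrite mulE !A0 // !A1 // !A2 // !A3 // !A4 //= v1 v0 v2; fin.
    have v3 : v 0 (inord 3) = 0.
      have nz : x * y ^+ 2 != 0 by rewrite mulf_neq0 ?expf_neq0.
      by move/eqP: e3; rewrite mulf_eq0 (negbTE nz) orbF => /eqP.
    have e4 : v 0 (inord 4) * (x ^+ 2 * y ^+ 3) = 0.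
      by move: (e 4%N isT); rewrite mulE !A0 // !A1 // !A2 // !A3 // !A4 //= v1 v0 v2 v3; fin.
    have v4 : v 0 (inord 4) = 0.
      have nz : x ^+ 2 * y ^+ 3 != 0 by rewrite mulf_neq0 ?expf_neq0.
      by move/eqP: e4; rewrite mulf_eq0 (negbTE nz) orbF => /eqP.
    apply: rowP5 => k; do 5?[case: k => [|k]] => // _; by rewrite mxE.
  move=> u v; apply: rowP5 => k hk; rewrite AE // mulE !AE //.
  move: hk; do 5?[case: k => [|k]] => // _; rewrite /amulF /= ?mulE
    !A0 // !A1 // !A2 // !A3 // !A4 //= -/al; ring.
Qed.
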